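(* The randomized query complexity of $TARSKI(2,k)$ is $\Omega(k)$: there is a constant $c>0$ such that for every $k\in\mathbb{N}$ it is at least $ck$.
   Context: $TARSKI(2,k)$: given oracle access to an unknown function $f:\{0,1\}^k\to\{0,1\}^k$ that is monotone for the componentwise order ($a\le b$ iff $a_i\le b_i$ for all $i$; monotone means $a\le b\Rightarrow f(a)\le f(b)$), where a query of $v$ returns $f(v)$, find $x$ with $f(x)=x$. The randomized query complexity is the minimum, over randomized algorithms that on every input output a fixed point with probability at least $9/10$, of the worst-case expected number of queries (expectation over the algorithm's coins). *)

(* Defs.v *)
From mathcomp Require Import all_boot.
From Stdlib Require Import Reals.
Set Implicit Arguments. Unset Strict Implicit. Unset Printing Implicit Defensive.

Definition cube (k : nat) := {ffun 'I_k -> bool}.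

Definition cube_le (k : nat) (a b : cube k) : Prop := forall i : 'I_k, (a i <= b i)%N.

Definition monotone (k : nat) (f : cube k -> cube k) : Prop :=
  forall a b : cube k, cube_le a b -> cube_le (f a) (f b).

(* Deterministic query algorithms = (finite-depth) decision trees:
   a node queries a point v and branches on the answer f v; a leaf outputs x. *)
Inductive dtree (k : nat) : Type :=
| Leaf  : cube k -> dtree k
| Query : cube k -> (cube k -> dtree k) -> dtree k.

Fixpoint run (k : nat) (t : dtree k) (f : cube k -> cube k) : cube k * nat :=
  match t with
  | Leaf x => (x, 0%N)
  | Query v next => let r := run (next (f v)) f in (r.1, r.2.+1)
  end.

Definition output (k : nat) (t : dtree k) f := (run t f).1.
Definition cost (k : nat) (t : dtree k) f : nat := (run t f).2.

Definition success (k : nat) (t : dtree k) (f : cube k -> cube k) : R :=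
  if f (output t f) == output t f then 1%R else 0%R.

(* A randomized algorithm: a (countable, discrete) probability distribution
   over deterministic decision trees. *)
Record ralg (k : nat) := RAlg {
  weight : nat -> R;
  tree : nat -> dtree k;
  weight_ge0 : forall i, (0 <= weight i)%R;
  weight_sum1 : Un_cv (sum_f_R0 weight) 1%R
}.

(* For a series u of nonnegative terms: b <= sum_i u i, i.e. b is at most
   the supremum of the partial sums (the value may be +infinity). *)
Definition series_ge (u : nat -> R) (b : R) : Prop :=
  forall E : R, (forall N, (sum_f_R0 u N <= E)%R) -> (b <= E)%R.

Definition succ_prob_ge (k : nat) (A : ralg k) f (b : R) : Prop :=
  series_ge (fun i => (weight A i * success (tree A i) f)%R) b.

Definition exp_cost_ge (k : nat) (A : ralg k) f (b : R) : Prop :=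
  series_ge (fun i => (weight A i * INR (cost (tree A i) f))%R) b.

Definition solves_tarski (k : nat) (A : ralg k) : Prop :=
  forall f : cube k -> cube k, monotone f -> succ_prob_ge A f (9/10)%R.

(* Main.v *)
Require Import Defs.
From mathcomp Require Import all_boot.
From Stdlib Require Import Reals.
From Stdlib Require Import Lra Psatz Classical.
From mathcomp Require Import all_boot.
From mathcomp Require Import zify.
Set Implicit Arguments. Unset Strict Implicit. Unset Printing Implicit Defensive.
Definition agreeb k (x y : cube k) (m : nat) : bool :=
  [forall j : 'I_k, (j < m) ==> (x j == y j)].

Definition F k (xs : cube k) : cube k -> cube k := fun x =>
  [ffun i : 'I_k => if agreeb x xs i then xs i
     else [exists j : 'I_k, [&& (j < i), agreeb x xs j, x j & ~~ xs j]]].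

Lemma agreebP k (x y : cube k) m :
  reflect (forall j : 'I_k, j < m -> x j = y j) (agreeb x y m).
Proof.
apply: (iffP forallP) => H j.
- by move=> lt; apply/eqP; exact: (implyP (H j)).
- by apply/implyP => lt; apply/eqP; exact: H.
Qed.

Lemma agree_le k (x y : cube k) m m' : m' <= m -> agreeb x y m -> agreeb x y m'.
Proof.
move=> le /agreebP H; apply/agreebP => j lt; apply: H; exact: leq_trans lt le.
Qed.

Lemma agree_sym k (x y : cube k) m : agreeb x y m = agreeb y x m.
Proof. by apply/agreebP/agreebP => H j lt; rewrite H. Qed.

Lemma agree_trans k (x y z : cube k) m : agreeb x y m -> agreeb y z m -> agreeb x z m.
Proof.
move=> /agreebP H1 /agreebP H2; apply/agreebP => j lt; by rewrite H1 // H2.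
Qed.

Lemma agree_full k (x y : cube k) m : k <= m -> agreeb x y m -> x = y.
Proof.
move=> le /agreebP H; apply/ffunP => j; apply: H; exact: leq_trans (ltn_ord j) le.
Qed.

Lemma agree0 k (x y : cube k) : agreeb x y 0.
Proof. by apply/agreebP. Qed.

Lemma first_dis k (x y : cube k) m : ~~ agreeb x y m ->
  exists j : 'I_k, [/\ j < m, agreeb x y j & x j != y j].
Proof.
elim: m => [|m IH]; first by rewrite agree0.
case Hm: (agreeb x y m); last by move=> _; case: (IH (negbT Hm)) => j [h1 h2 h3]; exists j; split => //; apply: ltnW.
rewrite /agreeb negb_forall => /existsP [j]; rewrite negb_imply => /andP [jlt neq].
have ejm : nat_of_ord j = m.
  case: (ltngtP j m) jlt => //.
  - by move=> l _; move/agreebP: Hm => /(_ j l) e; rewrite e eqxx in neq.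
  - by move=> l; rewrite ltnS leqNgt l.
exists j; split => //; by rewrite ejm.
Qed.

Lemma F_mono k (xs : cube k) : monotone (F xs).
Proof.
move=> x y le i; rewrite !ffunE.
case Ax: (agreeb x xs i).
- case Ay: (agreeb y xs i) => //.
  case: (first_dis (negbT Ay)) => j [ji Ayj nej].
  have exj : x j = xs j by move/agreebP: Ax => /(_ j ji).
  have lej := le j. rewrite exj in lej.
  suff -> : [exists j0 : 'I_k, [&& j0 < i, agreeb y xs j0, y j0 & ~~ xs j0]] by case: (xs i).
  apply/existsP; exists j; rewrite ji Ayj /=.
  by move: lej nej; case: (xs j); case: (y j).
- case/boolP: [exists j : 'I_k, [&& j < i, agreeb x xs j, x j & ~~ xs j]] => [/existsP [j /and4P [ji Axj xj nxsj]]|]; last by [].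
  have yj : y j by move: (le j); rewrite xj; case: (y j).
  have Ay : agreeb y xs i = false.
    apply/negbTE/negP => /agreebP /(_ j ji) e; by rewrite e (negbTE nxsj) in yj.
  rewrite Ay.
  case: (first_dis (negbT Ay)) => j' [j'i Ayj' nej'].
  suff -> : [exists j0 : 'I_k, [&& j0 < i, agreeb y xs j0, y j0 & ~~ xs j0]] by [].
  apply/existsP; exists j'; rewrite j'i Ayj' /=.
  case: (ltngtP j' j) => c.
  + have exj : x j' = xs j' by move/agreebP: Axj => /(_ j' c).
    have lej := le j'. rewrite exj in lej.
    by move: lej nej'; case: (xs j'); case: (y j').
  + by move/agreebP: Ayj' => /(_ j c) e; rewrite e (negbTE nxsj) in yj.
  + have ej : j' = j by apply: val_inj.
    by rewrite ej yj.
Qed.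

Lemma F_fix k (xs x : cube k) : (F xs x == x) = (x == xs).
Proof.
apply/eqP/eqP => [H|->].
- case A: (agreeb x xs k); first exact: agree_full A.
  case: (first_dis (negbT A)) => j [_ Aj nej].
  have : F xs x j = x j by rewrite H.
  rewrite ffunE Aj => e; by rewrite e eqxx in nej.
- apply/ffunP => i; rewrite ffunE.
  have -> : agreeb xs xs i by apply/agreebP.
  by [].
Qed.

Lemma agree_split_lt k (q z : cube k) (m : 'I_k) (i : 'I_k) :
  agreeb q z m -> q m != z m -> agreeb q z i = (i <= m).
Proof.
move=> A ne; case: (leqP i m) => c.
- by apply: agree_le A.
- apply/negbTE/negP => /agreebP /(_ m c) e; by rewrite e eqxx in ne.
Qed.

Lemma F_exists k (q z : cube k) (m : 'I_k) (i : 'I_k) :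
  agreeb q z m -> q m != z m -> m < i ->
  [exists j : 'I_k, [&& (j < i), agreeb q z j, q j & ~~ z j]] = q m && ~~ z m.
Proof.
move=> A ne mi; apply/existsP/idP.
- case=> j /and4P [ji Aj qj nzj].
  case: (ltngtP j m) => c.
  + by move/agreebP: A => /(_ j c) e; rewrite e (negbTE nzj) in qj.
  + by move/agreebP: Aj => /(_ m c) e; rewrite e eqxx in ne.
  + have ej : j = m by apply: val_inj.
    by rewrite -ej qj nzj.
- move=> /andP [qm nzm]; exists m; by rewrite mi A qm nzm.
Qed.

Lemma F_dep k (xs xs' q : cube k) (m : 'I_k) :
  agreeb q xs m -> q m != xs m -> agreeb xs xs' m.+1 -> F xs q = F xs' q.
Proof.
move=> A ne A'.
have em : xs m = xs' m by move/agreebP: A' => /(_ m (ltnSn m)).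
have B : agreeb q xs' m by apply: agree_trans A (agree_le (leqnSn m) A').
have ne' : q m != xs' m by rewrite -em.
apply/ffunP => i; rewrite !ffunE (agree_split_lt i A ne) (agree_split_lt i B ne').
case: (leqP i m) => c.
- by move/agreebP: A' => /(_ i); rewrite ltnS => ->.
- by rewrite (F_exists A ne c) (F_exists B ne' c) em.
Qed.
Definition flip k (q : cube k) (l : 'I_k) : cube k :=
  [ffun i => if i == l then ~~ q i else q i].

Lemma agree_split1 k (x q : cube k) (l : 'I_k) :
  agreeb x q l && (x l == q l) = agreeb x q l.+1.
Proof.
apply/andP/agreebP.
- move=> [/agreebP A /eqP e] j; rewrite ltnS leq_eqVlt => /orP [/eqP ej|lt].
  + by have -> : j = l by apply: val_inj.
  + exact: A.
- move=> H; split; last by apply/eqP; apply: H.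
  apply/agreebP => j lt; apply: H; exact: ltnW.
Qed.

Lemma agree_split2 k (x q : cube k) (l : 'I_k) :
  agreeb x q l && (x l != q l) = agreeb x (flip q l) l.+1.
Proof.
apply/andP/agreebP.
- move=> [/agreebP A ne] j; rewrite ltnS leq_eqVlt ffunE => /orP [/eqP ej|lt].
  + have -> : j = l by apply: val_inj.
    by rewrite eqxx; move: ne; case: (x l); case: (q l).
  + have -> : (j == l) = false by apply/negbTE; rewrite neq_ltn lt.
    exact: A.
- move=> H; split.
  + apply/agreebP => j lt; rewrite H ?ffunE; last exact: ltnW.
    by have -> : (j == l) = false by apply/negbTE; rewrite neq_ltn lt.
  + by rewrite H // ffunE eqxx; case: (q l).
Qed.

Lemma sum_split k (q : cube k) (l : 'I_k) (g : cube k -> nat) :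
  \sum_(x | agreeb x q l) g x =
  \sum_(x | agreeb x q l.+1) g x + \sum_(x | agreeb x (flip q l) l.+1) g x.
Proof.
rewrite (bigID (fun x : cube k => x l == q l)) /=.
congr (_ + _); apply: eq_bigl => x; [exact: agree_split1 | exact: agree_split2].
Qed.

Lemma sum_full k (q : cube k) (g : cube k -> nat) :
  \sum_(x | agreeb x q k) g x = g q.
Proof.
rewrite (eq_bigl (fun x => x == q)) ?big_pred1_eq // => x.
apply/idP/eqP => [A|->]; first exact: agree_full A.
by apply/agreebP.
Qed.

Lemma card_Q k n : forall L (q : cube k), L + n = k -> \sum_(x | agreeb x q L) 1 = 2 ^ n.
Proof.
elim: n => [|n IH] L q e.
- rewrite addn0 in e; subst L; by rewrite sum_full.
- have Lk : L < k by lia.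
  have := sum_split q (Ordinal Lk) (fun _ => 1) => /= ->.
  rewrite !IH; [by rewrite expnS; lia | lia | lia].
Qed.

Definition succn k (t : dtree k) (f : cube k -> cube k) : nat :=
  (f (output t f) == output t f).

Lemma succn_le1 k (t : dtree k) f : succn t f <= 1.
Proof. by rewrite /succn; case: (_ == _). Qed.

Lemma flip_agree k (q : cube k) (l : 'I_k) : agreeb q (flip q l) l.
Proof.
apply/agreebP => j lt; rewrite ffunE.
by have -> : (j == l) = false by apply/negbTE; rewrite neq_ltn lt.
Qed.

Lemma flip_ne k (q : cube k) (l : 'I_k) : q l != flip q l l.
Proof. by rewrite ffunE eqxx; case: (q l). Qed.

Definition pot k (t : dtree k) n L (p : cube k) :=
  2 * k * \sum_(x | agreeb x p L) succn t (F x) <=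
  2 ^ n * (k + L) + 2 * \sum_(x | agreeb x p L) cost t (F x).

Lemma inner k (q : cube k) (nx : cube k -> dtree k)
  (IH : forall y n L p, L + n = k -> pot (nx y) n L p) :
  forall n L, L + n = k ->
  2 * k * \sum_(x | agreeb x q L) succn (nx (F x q)) (F x) + 2 <=
  2 ^ n * (k + L + 2) + 2 * \sum_(x | agreeb x q L) cost (nx (F x q)) (F x).
Proof.
elim=> [|n IHn] L e.
- rewrite addn0 in e; subst L; rewrite !sum_full expn0.
  have := succn_le1 (nx (F q q)) (F q); nia.
- have Lk : L < k by lia.
  set l := Ordinal Lk.
  rewrite (sum_split q l) (sum_split q l (fun x => cost _ _)) /=.
  have E : forall x, agreeb x (flip q l) l.+1 -> F x q = F (flip q l) q.
    move=> x Ax; symmetry; apply: (F_dep (m := l)).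
    + exact: flip_agree.
    + exact: flip_ne.
    + by rewrite agree_sym.
  rewrite [\sum_(x | agreeb x (flip q l) l.+1) succn _ _](eq_bigr (fun x => succn (nx (F (flip q l) q)) (F x))); last by move=> x Ax; rewrite (@E x Ax).
  rewrite [\sum_(x | agreeb x (flip q l) l.+1) cost _ _](eq_bigr (fun x => cost (nx (F (flip q l) q)) (F x))); last by move=> x Ax; rewrite (@E x Ax).
  have H1 := IH (F (flip q l) q) n l.+1 (flip q l) ltac:(rewrite /=; lia).
  have H2 := IHn l.+1 ltac:(rewrite /=; lia).
  rewrite /pot /= in H1; rewrite /= in H2.
    rewrite expnS; set P := 2 ^ n in H1 H2 *.
  set S1 := \sum_(x | _) succn (nx (F (flip q l) q)) _ in H1 *.
  set C1 := \sum_(x | _) cost (nx (F (flip q l) q)) _ in H1 *.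
  set S2 := \sum_(x | _) succn _ _ in H2 *.
  set C2 := \sum_(x | _) cost _ _ in H2 *.
  nia.
Qed.

Lemma potP k (t : dtree k) : forall n L p, L + n = k -> pot t n L p.
Proof.
elim: t => [out|q nx IH] n L p e; rewrite /pot.
- have -> : \sum_(x | agreeb x p L) succn (Leaf out) (F x) = \sum_(x | agreeb x p L) (out == x).
    by apply: eq_bigr => x _; rewrite /succn /output /= F_fix.
  have S1 : \sum_(x | agreeb x p L) (out == x : nat) <= 1.
    apply: leq_trans (_ : _ <= \sum_x (out == x : nat)) _.
    - rewrite [X in _ <= X](bigID (fun x => agreeb x p L)) /=; apply: leq_addr.
    - rewrite (bigD1 out) //= eqxx big1 // => x ne; by rewrite eq_sym (negbTE ne).
  case: n e => [|n] e.
  + nia.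
  + have : 2 <= 2 ^ n.+1 by rewrite expnS; have := expn_gt0 2 n; lia.
    nia.
- case Aq: (agreeb q p L).
  + have EQ : forall x, agreeb x p L = agreeb x q L.
      move=> x; apply/idP/idP => A.
      * by apply: agree_trans A _; rewrite agree_sym.
      * exact: agree_trans A Aq.
    rewrite !(eq_bigl _ _ EQ).
    have -> : \sum_(x | agreeb x q L) cost (Query q nx) (F x) =
              \sum_(x | agreeb x q L) cost (nx (F x q)) (F x) + \sum_(x | agreeb x q L) 1.
      by rewrite -big_split /=; apply: eq_bigr => x _; rewrite addn1.
    rewrite (card_Q q e).
    have := @inner k q nx IH n L e.
    have -> : \sum_(x | agreeb x q L) succn (Query q nx) (F x) =
              \sum_(x | agreeb x q L) succn (nx (F x q)) (F x) by [].
    nia.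
  + case: (first_dis (negbT Aq)) => j [jL Aj nej].
    have E : forall x, agreeb x p L -> F x q = F p q.
      move=> x Ax; symmetry; apply: (F_dep (m := j)) => //.
      rewrite agree_sym; exact: agree_le Ax.
    have -> : \sum_(x | agreeb x p L) succn (Query q nx) (F x) =
              \sum_(x | agreeb x p L) succn (nx (F p q)) (F x).
      by apply: eq_bigr => x /E; rewrite /succn /output /= => ->.
    have C : \sum_(x | agreeb x p L) cost (nx (F p q)) (F x) <=
             \sum_(x | agreeb x p L) cost (Query q nx) (F x).
      by apply: leq_sum => x Ax; rewrite /cost /= (@E x Ax).
    have := IH (F p q) n L p e; rewrite /pot; nia.
Qed.
Local Open Scope R_scope.
Definition lsum (T : Type) (s : seq T) (g : T -> R) : R :=
  foldr (fun x acc => (g x + acc)) 0 s.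

Lemma sum_zero N : sum_f_R0 (fun _ => 0) N = 0.
Proof. elim: N => [|N IH] /=; [by [] | rewrite IH; ring]. Qed.

Lemma lsum_sum (T : Type) (s : seq T) (a : nat -> T -> R) N :
  lsum s (fun x => sum_f_R0 (fun i => a i x) N) = sum_f_R0 (fun i => lsum s (a i)) N.
Proof.
elim: s => [|x s IH] /=; first by rewrite sum_zero.
by rewrite IH -plus_sum.
Qed.

Lemma lsum_scal (T : Type) (s : seq T) (c : R) g :
  lsum s (fun x => c * g x) = (c * lsum s g).
Proof. elim: s => [|x s IH] /=; [ring | rewrite IH; ring]. Qed.

Lemma lsum_le (T : Type) (s : seq T) (g h : T -> R) :
  (forall x, List.In x s -> (g x <= h x)) -> (lsum s g <= lsum s h).
Proof.
elim: s => [|x s IH] H /=; first lra.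
apply: Rplus_le_compat; first by apply: H; left.
by apply: IH => y Hy; apply: H; right.
Qed.

Lemma lsum_ext (T : Type) (s : seq T) (g h : T -> R) :
  (forall x, g x = h x) -> lsum s g = lsum s h.
Proof. by move=> H; elim: s => [|x s IH] //=; rewrite H IH. Qed.

Lemma INR_big (T : Type) (s : seq T) (g : T -> nat) :
  INR (\sum_(x <- s) g x) = lsum s (fun x => INR (g x)).
Proof.
elim: s => [|x s IH]; first by rewrite big_nil.
by rewrite big_cons plus_INR IH.
Qed.

Lemma sum_mono (u : nat -> R) N M : (forall i, (0 <= u i)) -> (N <= M)%N ->
  (sum_f_R0 u N <= sum_f_R0 u M).
Proof.
move=> H; elim: M => [|M IH] le.
- have -> : N = 0%N by lia.
  lra.
- case: (ltngtP N M.+1) le => // c _.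
  + have := IH c; have := H M.+1; simpl; lra.
  + by rewrite c; lra.
Qed.

Lemma success_INR k (t : dtree k) f : success t f = INR (succn t f).
Proof. by rewrite /success /succn; case: (_ == _). Qed.

Lemma exN k (A : ralg k) (P : cube k -> nat -> R) :
  (forall x N M, (N <= M)%N -> (P x N <= P x M)) ->
  (forall x, exists N, (8/10 < P x N)) ->
  forall s : seq (cube k), exists N, forall x, List.In x s -> (8/10 < P x N).
Proof.
move=> mono ex; elim=> [|x s [N IH]]; first by exists 0%N.
case: (ex x) => N' H'.
exists (maxn N N') => y [<-|Hy].
- apply: Rlt_le_trans H' (mono _ _ _ _); lia.
- apply: Rlt_le_trans (IH _ Hy) (mono _ _ _ _); lia.
Qed.

Theorem proposition6 :
  exists c : R, (0 < c) /\
    forall (k : nat) (A : ralg k), solves_tarski A ->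
      exists f : cube k -> cube k, monotone f /\ exp_cost_ge A f (c * INR k).
Proof.
exists (1/10); split; first lra.
move=> k A HA.
set x0 : cube k := [ffun _ => false].
have wpos := weight_ge0 A.
case: (posnP k) => [k0|kpos].
- exists (F x0); split; first exact: F_mono.
  move=> E HE; have := HE 0%N; have -> : INR k = 0 by rewrite k0.
  have := wpos 0%N; have := pos_INR (cost (tree A 0) (F x0)); simpl; nra.
apply: NNPP => Hno.
have Hc : forall x, exists E, (forall N, (sum_f_R0 (fun i => weight A i * INR (cost (tree A i) (F x))) N <= E)) /\ (E < 1/10 * INR k).
  move=> x; apply: NNPP => Hx; apply: Hno; exists (F x); split; first exact: F_mono.
  move=> E HE; apply: Rnot_lt_le => Hlt; apply: Hx; by exists E.
set P := fun x N => sum_f_R0 (fun i => weight A i * success (tree A i) (F x)) N.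
have Pmono : forall x N M, (N <= M)%N -> (P x N <= P x M).
  move=> x N M le; apply: sum_mono le => i.
  rewrite success_INR; apply: Rmult_le_pos => //; exact: pos_INR.
have Pex : forall x, exists N, (8/10 < P x N).
  move=> x; apply: NNPP => Hx.
  have := HA (F x) (F_mono x) (8/10); rewrite /succ_prob_ge.
  have H : forall N, (P x N <= 8/10).
    move=> N; apply: Rnot_lt_le => Hl; apply: Hx; by exists N.
  move=> /(_ H); lra.
set s := index_enum (cube k).
case: (exN A Pmono Pex s) => N HN.
set SS := fun i => \sum_(x <- s) succn (tree A i) (F x).
set CC := fun i => \sum_(x <- s) cost (tree A i) (F x).
have card : (\sum_(x <- s) 1 = 2 ^ k)%N.
  by rewrite -(@card_Q k k 0 x0) //; apply: eq_bigl => x; rewrite agree0.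
have pot0 : forall i, (2 * INR k * INR (SS i) <= INR (2 ^ k) * INR k + 2 * INR (CC i)).
  move=> i; have := @potP k (tree A i) k 0 x0 erefl; rewrite /pot addn0.
  rewrite !(eq_bigl _ _ (fun x => agree0 x x0)) -/(SS i) -/(CC i).
  move=> /leP /le_INR; rewrite !plus_INR !mult_INR /=; lra.
have Ssum : lsum s (fun x => P x N) = sum_f_R0 (fun i => weight A i * INR (SS i)) N.
  rewrite /P lsum_sum. apply: PartSum.sum_eq => i _.
  rewrite /SS INR_big -lsum_scal; apply: lsum_ext => x.
  by rewrite success_INR.
have Csum : lsum s (fun x => sum_f_R0 (fun i => weight A i * INR (cost (tree A i) (F x))) N)
            = sum_f_R0 (fun i => weight A i * INR (CC i)) N.
  rewrite lsum_sum; apply: PartSum.sum_eq => i _.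
  by rewrite /CC INR_big -lsum_scal.
have Slow : (8/10 * INR (2 ^ k) <= lsum s (fun x => P x N)).
  rewrite -card INR_big -lsum_scal; apply: lsum_le => x Hx.
  have := HN x Hx; simpl; lra.
have Chigh : (lsum s (fun x => sum_f_R0 (fun i => weight A i * INR (cost (tree A i) (F x))) N)
              <= 1/10 * INR k * INR (2 ^ k)).
  rewrite -card INR_big. rewrite -lsum_scal; apply: lsum_le => x _.
  case: (Hc x) => E [HE HEl]; have := HE N; simpl; lra.
have Wle : (sum_f_R0 (weight A) N <= 1).
  apply: growing_ineq; last exact: weight_sum1.
  move=> n /=; have := wpos n.+1; lra.
have Key : (2 * INR k * sum_f_R0 (fun i => weight A i * INR (SS i)) N <=
            INR (2 ^ k) * INR k * sum_f_R0 (weight A) N + 2 * sum_f_R0 (fun i => weight A i * INR (CC i)) N).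
  rewrite !scal_sum -plus_sum; apply: sum_Rle => i _.
  have := pot0 i; have := wpos i; nra.
rewrite Ssum in Slow; rewrite Csum in Chigh.
have kp : (0 < INR k) by apply: lt_0_INR; apply/ltP.
have pp : (0 < INR (2 ^ k)) by apply: lt_0_INR; apply/ltP; exact: expn_gt0.
have X : (0 <= INR (2 ^ k) * INR k * (1 - sum_f_R0 (weight A) N)).
  apply: Rmult_le_pos; [nra | lra].
nra.
Qed.
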